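(* Let $X,Y\colon\mathcal H\leftarrow\mathcal G$ be groupoid correspondences. Any $\mathcal H,\mathcal G$-equivariant continuous map $\alpha\colon X\to Y$ is a local homeomorphism. Consequently, an injective such map is a homeomorphism from $X$ onto an open subset of $Y$, and it is a homeomorphism onto $Y$ if it is also surjective.
   Context: Groupoids are étale ($r,s$ local homeomorphisms, continuous multiplication and inversion) with Hausdorff locally compact object space. A groupoid correspondence $X\colon\mathcal H\leftarrow\mathcal G$ is a space with commuting continuous left $\mathcal H$-action (anchor $r\colon X\to\mathcal H^0$) and right $\mathcal G$-action (anchor $s\colon X\to\mathcal G^0$), such that $s$ is a local homeomorphism and the right action is free and proper. A map $\alpha$ is $\mathcal H,\mathcal G$-equivariant if it preserves both anchor maps and satisfies $\alpha(hxg)=h\alpha(x)g$. *)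

(* Defs.v *)
From HB Require Import structures.
From mathcomp Require Import all_boot all_order all_algebra.
From mathcomp Require Import all_classical all_reals topology.
Set Implicit Arguments. Unset Strict Implicit. Unset Printing Implicit Defensive.
Local Open Scope classical_set_scope.

(* f is a local homeomorphism: continuous, and every point has an open
   neighbourhood U such that f(U) is open and f restricted to U is a
   homeomorphism onto f(U) (i.e. injective on U and mapping open subsets
   of U to open sets). *)
Definition local_homeo (X Y : topologicalType) (f : X -> Y) : Prop :=
  continuous f /\
  forall x : X, exists U : set X,
    [/\ open U, U x, open (f @` U), {in U &, injective f} &
        forall V : set X, open V -> V `<=` U -> open (f @` V)].

Record etale_groupoid := EtaleGroupoid {
  arr : topologicalType;
  obj : topologicalType;
  gr : arr -> obj;
  gs : arr -> obj;
  gu : obj -> arr;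
  ginv : arr -> arr;
  gmul : arr -> arr -> arr;
  gr_u : forall x, gr (gu x) = x;
  gs_u : forall x, gs (gu x) = x;
  gr_mul : forall g h, gs g = gr h -> gr (gmul g h) = gr g;
  gs_mul : forall g h, gs g = gr h -> gs (gmul g h) = gs h;
  gmulA : forall g h k, gs g = gr h -> gs h = gr k ->
    gmul (gmul g h) k = gmul g (gmul h k);
  gmul1l : forall g, gmul (gu (gr g)) g = g;
  gmul1r : forall g, gmul g (gu (gs g)) = g;
  gr_inv : forall g, gr (ginv g) = gs g;
  gs_inv : forall g, gs (ginv g) = gr g;
  gmulV : forall g, gmul g (ginv g) = gu (gr g);
  gmulVg : forall g, gmul (ginv g) g = gu (gs g);
  gu_cont : continuous gu;
  ginv_cont : continuous ginv;
  gmul_cont : {within [set p : arr * arr | gs p.1 = gr p.2],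
                 continuous (fun p : arr * arr => gmul p.1 p.2)};
  gr_etale : local_homeo gr;
  gs_etale : local_homeo gs;
  obj_hausdorff : hausdorff_space obj;
  obj_locally_compact : locally_compact [set: obj]
}.

(* Groupoid correspondence X : H <- G. [lact h x] = h·x (defined when
   gs h = cr x), [ract x g] = x·g (defined when cs x = gr g). *)
Record correspondence (H G : etale_groupoid) := Correspondence {
  corr_space : topologicalType;
  cr : corr_space -> obj H;
  cs : corr_space -> obj G;
  lact : arr H -> corr_space -> corr_space;
  ract : corr_space -> arr G -> corr_space;
  cr_cont : continuous cr;
  lact_cont : {within [set p : arr H * corr_space | gs p.1 = cr p.2],
                 continuous (fun p : arr H * corr_space => lact p.1 p.2)};
  cr_lact : forall h x, gs h = cr x -> cr (lact h x) = gr h;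
  lact1 : forall x, lact (gu (cr x)) x = x;
  lactM : forall h k x, gs h = gr k -> gs k = cr x ->
    lact (gmul h k) x = lact h (lact k x);
  cs_etale : local_homeo cs;
  ract_cont : {within [set p : corr_space * arr G | cs p.1 = gr p.2],
                 continuous (fun p : corr_space * arr G => ract p.1 p.2)};
  cs_ract : forall x g, cs x = gr g -> cs (ract x g) = gs g;
  ract1 : forall x, ract x (gu (cs x)) = x;
  ractM : forall x g k, cs x = gr g -> gs g = gr k ->
    ract x (gmul g k) = ract (ract x g) k;
  cs_lact : forall h x, gs h = cr x -> cs (lact h x) = cs x;
  cr_ract : forall x g, cs x = gr g -> cr (ract x g) = cr x;
  lact_ract : forall h x g, gs h = cr x -> cs x = gr g ->
    lact h (ract x g) = ract (lact h x) g;
  ract_free : forall x g, cs x = gr g -> ract x g = x -> g = gu (cs x);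
  (* the right action is proper: the (continuous) map
     X ×_{G^0} G -> X × X, (x,g) |-> (x, x·g) has compact preimages of
     compact sets *)
  ract_proper : forall K : set (corr_space * corr_space), compact K ->
    compact [set p : corr_space * arr G | cs p.1 = gr p.2 /\ K (p.1, ract p.1 p.2)]
}.

Definition equivariant (H G : etale_groupoid) (X Y : correspondence H G)
  (a : corr_space X -> corr_space Y) : Prop :=
  [/\ forall x, cr (a x) = cr x,
      forall x, cs (a x) = cs x,
      forall h x, gs h = cr x -> a (lact h x) = lact h (a x) &
      forall x g, cs x = gr g -> a (ract x g) = ract (a x) g].

(* Main.v *)
Require Import Defs.
From mathcomp Require Import all_boot all_order all_algebra.
From mathcomp Require Import all_classical all_reals topology.
Local Open Scope classical_set_scope.

Lemma key (X Y Z : topologicalType) (a : X -> Y) (p : X -> Z) (q : Y -> Z) :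
  continuous a -> local_homeo p -> local_homeo q -> (forall x, q (a x) = p x) ->
  forall x, exists W : set X, [/\ open W, W x, {in W &, injective a} &
     forall V, open V -> V `<=` W -> open (a @` V)].
Proof.
move=> ca [cp hp] [cq hq] hqa x.
have [U [oU Ux _ iU VU]] := hp x.
have [U' [oU' U'x _ iU' VU']] := hq (a x).
exists (U `&` a @^-1` U'); split.
- apply: openI => //; exact: (proj1 (continuousP _) ca).
- by split.
- move=> y z; rewrite !inE => -[Uy U'y] [Uz U'z] e.
  apply: iU; rewrite ?inE //. by rewrite -!hqa e.
- move=> V oV VW.
  have -> : a @` V = U' `&` q @^-1` (p @` V).
    apply/seteqP; split.
    + move=> _ [v Vv <-]; split; first by have [] := VW v Vv.
      by exists v => //; rewrite hqa.
    + move=> y [U'y [v Vv e]]; exists v => //.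
      apply: iU'; rewrite ?inE //; last by rewrite hqa.
      by have [] := VW v Vv.
  apply: openI => //; apply: (proj1 (continuousP _) cq).
  apply: VU => // v Vv; by have [] := VW v Vv.
Qed.

Theorem lemma6p1 (H G : etale_groupoid) (X Y : correspondence H G)
  (a : corr_space X -> corr_space Y) :
  equivariant a -> continuous a ->
  [/\ local_homeo a,
      injective a ->
        open (range a) /\ (forall U : set (corr_space X), open U -> open (a @` U)) &
      injective a -> (forall y, exists x, a x = y) ->
        exists b : corr_space Y -> corr_space X,
          [/\ continuous b, cancel a b & cancel b a]].
Proof.
move=> [_ hcs _ _] ca.
have K := @key _ _ _ a _ _ ca (cs_etale X) (cs_etale Y) hcs.
have openim : forall U, open U -> open (a @` U).
  move=> U oU.
  have -> : a @` U = \bigcup_(x in U) a @` (U `&` projT1 (cid (K x))).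
    apply/seteqP; split.
    + move=> _ [u Uu <-]; exists u => //; exists u => //; split => //.
      by case: (cid (K u)) => W [].
    + by move=> _ [x Ux [v [Uv _] <-]]; exists v.
  apply: bigcup_open => x Ux.
  case: (cid (K x)) => W [oW Wx _ hV] /=.
  apply: hV; [exact: openI | by move=> ? []].
split.
- split => // x; have [W [oW Wx iW hV]] := K x.
  by exists W; split => //; apply: hV.
- move=> ia; split; last exact: openim.
  by apply: openim; exact: openT.
- move=> ia sa.
  exists (fun y => projT1 (cid (sa y))).
  have ab : cancel a (fun y => projT1 (cid (sa y))).
    by move=> x; case: (cid (sa (a x))) => z /= /ia.
  have ba : cancel (fun y => projT1 (cid (sa y))) a.
    by move=> y; case: (cid (sa y)).
  split => //.
  apply/continuousP => U oU.
  have -> : (fun y => projT1 (cid (sa y))) @^-1` U = a @` U.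
    apply/seteqP; split.
    + by move=> y Uy; exists (projT1 (cid (sa y))) => //; rewrite ba.
    + by move=> _ [u Uu <-]; have := ab u; rewrite /preimage /= => ->.
  exact: openim.
Qed.
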